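(* Equip $\mathfrak{M}$ with the inverse lexicographic term order determined by the total order $x_{1,2}>x_{1,3}>\cdots>x_{1,n}>x_{2,3}>x_{2,4}>\cdots>x_{2,n}>\cdots>x_{n-1,n}$ on the indeterminates (i.e., $x_{i,j}>x_{u,v}$ iff $i<u$, or $i=u$ and $j<v$). Then the set $$G=\{\,x_{i,k}x_{i,j}-x_{i,j}x_{j,k}+x_{i,k}x_{j,k}+\beta x_{i,k}+\alpha \ \mid\ 1\le i<j<k\le n\,\}$$ is a Gröbner basis of the ideal $\mathcal{J}$ of $\mathcal{X}$ with respect to this order.
   Context: Let $\mathbf{k}$ be a commutative ring, $\beta,\alpha\in\mathbf{k}$, $n$ a positive integer. Let $\mathcal{X}=\mathbf{k}[x_{i,j}\mid 1\le i<j\le n]$ be the polynomial ring in the indeterminates $x_{i,j}$, $\mathfrak{M}$ its set of monomials, and $\mathcal{J}$ the ideal generated by all $x_{i,j}x_{j,k}-x_{i,k}(x_{i,j}+x_{j,k}+\beta)-\alpha$ for $1\le i<j<k\le n$. Inverse lexicographic order determined by a total order on the indeterminates: for monomials $\mathfrak{m}=\prod\xi^{m_\xi}$, $\mathfrak{n}=\prod\xi^{n_\xi}$, $\mathfrak{m}\le\mathfrak{n}$ iff $\mathfrak{m}=\mathfrak{n}$ or the largest indeterminate $\xi$ with $m_\xi\neq n_\xi$ has $m_\xi<n_\xi$. For nonzero $f$, the head term $\operatorname{HT}(f)$ is the largest monomial with nonzero coefficient in $f$; $f$ is monic if that coefficient is $1$. For a set $G$ of monic polynomials, write $f\underset{G}{\longrightarrow}g$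 if there exist $p\in G$ and monomials $\mathfrak{t},\mathfrak{s}$ such that the coefficient $a$ of $\mathfrak{t}$ in $f$ is nonzero, $\mathfrak{s}\operatorname{HT}(p)=\mathfrak{t}$, and $g=f-a\,\mathfrak{s}\,p$; let $\overset{*}{\underset{G}{\longrightarrow}}$ be its reflexive-transitive closure. A set $G$ of monic polynomials is a Gröbner basis of an ideal $\mathcal{I}$ if $G$ generates $\mathcal{I}$ and every $p\in\mathcal{I}$ satisfies $p\overset{*}{\underset{G}{\longrightarrow}}0$ (equivalently, every polynomial reduces via $\overset{*}{\underset{G}{\longrightarrow}}$ to a unique polynomial that is a $\mathbf{k}$-linear combination of monomials not divisible by any $\operatorname{HT}(g)$, $g\in G$). *)

(* Defs.v *)
From HB Require Import structures.
From mathcomp Require Import all_boot all_order all_algebra.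
Set Implicit Arguments. Unset Strict Implicit. Unset Printing Implicit Defensive.
Import GRing.Theory.
Local Open Scope ring_scope.

Section Poly.
Variable R : comNzRingType.
Variable n : nat.

(* indeterminates x_{i,j}, 0 <= i < j < n  (0-based indices) *)
Definition var := {p : 'I_n * 'I_n | (p.1 < p.2)%N}.
Definition mkvar (i j : 'I_n) (h : (i < j)%N) : var := exist _ (i, j) h.

Definition var_gt (a b : var) : bool :=
  ((val a).1 < (val b).1)%N ||
  (((val a).1 == (val b).1) && ((val a).2 < (val b).2)%N).

Definition mono := {ffun var -> nat}.
Definition mono1 : mono := [ffun _ => 0%N].
Definition monoX (a : var) : mono := [ffun v => nat_of_bool (v == a)].
Definition monoM (m1 m2 : mono) : mono := [ffun v => (m1 v + m2 v)%N].

(* inverse lexicographic order: m <= m' iff m = m' or the largest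
   indeterminate where the exponents differ has smaller exponent in m *)
Definition mono_le (m m' : mono) : Prop :=
  m = m' \/ exists xi : var, (m xi < m' xi)%N /\
             forall eta : var, var_gt eta xi -> m eta = m' eta.

(* polynomials = coefficient functions on monomials
   (only finitely supported ones ever arise below) *)
Definition poly := mono -> R.
Definition p0 : poly := fun _ => 0.
Definition pC (c : R) : poly := fun t => if t == mono1 then c else 0.
Definition pM (m : mono) : poly := fun t => if t == m then 1 else 0.
Definition padd (p q : poly) : poly := fun t => p t + q t.
Definition psub (p q : poly) : poly := fun t => p t - q t.
(* a * s * p for a scalar a and a monomial s *)
Definition pterm_mul (a : R) (s : mono) (p : poly) : poly :=
  fun t => if [forall v, (s v <= t v)%N]
           then a * p [ffun v => (t v - s v)%N] else 0.

Definition is_HT (p : poly) (h : mono) : Prop :=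
  p h != 0 /\ forall t, p t != 0 -> mono_le t h.
Definition monic (p : poly) : Prop := exists h, is_HT p h /\ p h = 1.

Inductive in_ideal (S : poly -> Prop) : poly -> Prop :=
| in_ideal0 : in_ideal S p0
| in_ideal_step (a : R) (s : mono) (g p : poly) :
    S g -> in_ideal S p -> in_ideal S (padd p (pterm_mul a s g)).

Definition red1 (G : poly -> Prop) (f g : poly) : Prop :=
  exists (p : poly) (t s : mono), G p /\ f t != 0 /\
    (exists h, is_HT p h /\ monoM s h = t) /\
    g = psub f (pterm_mul (f t) s p).

Inductive red_star (G : poly -> Prop) : poly -> poly -> Prop :=
| red_refl f : red_star G f f
| red_step f g h : red1 G f g -> red_star G g h -> red_star G f h.

Definition groebner_basis (G I : poly -> Prop) : Prop :=
  (forall g, G g -> monic g) /\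
  (forall p, in_ideal G p <-> I p) /\
  (forall p, I p -> red_star G p p0).

Definition pXX (a b : var) : poly := pM (monoM (monoX a) (monoX b)).
Definition pX (a : var) : poly := pM (monoX a).

Variables beta alpha : R.

Definition genJ (i j k : 'I_n) (hij : (i < j)%N) (hjk : (j < k)%N) : poly :=
  let xij := mkvar hij in let xjk := mkvar hjk in
  let xik := mkvar (ltn_trans hij hjk) in
  psub (psub (psub (psub (pXX xij xjk) (pXX xik xij)) (pXX xik xjk))
             (pterm_mul beta mono1 (pX xik))) (pC alpha).

Definition genG (i j k : 'I_n) (hij : (i < j)%N) (hjk : (j < k)%N) : poly :=
  let xij := mkvar hij in let xjk := mkvar hjk in
  let xik := mkvar (ltn_trans hij hjk) in
  padd (padd (padd (psub (pXX xik xij) (pXX xij xjk)) (pXX xik xjk))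
             (pterm_mul beta mono1 (pX xik))) (pC alpha).

Definition Jgens (p : poly) : Prop :=
  exists (i j k : 'I_n) (hij : (i < j)%N) (hjk : (j < k)%N), p = genJ hij hjk.
Definition Jideal : poly -> Prop := in_ideal Jgens.
Definition Gset (p : poly) : Prop :=
  exists (i j k : 'I_n) (hij : (i < j)%N) (hjk : (j < k)%N), p = genG hij hjk.

End Poly.

(* Main.v *)
Require Import Defs.
From HB Require Import structures.
From mathcomp Require Import all_boot all_order all_algebra.
From mathcomp Require Import zify ring.
From Stdlib Require Import FunctionalExtensionality.
Set Implicit Arguments. Unset Strict Implicit. Unset Printing Implicit Defensive.
Import GRing.Theory.

Section Main.
Variable R : comNzRingType.
Variable n : nat.
Local Notation var := (var n).
Local Notation mono := (mono n).
Local Notation Poly := (Defs.poly R n).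

Definition row (v : var) : nat := (val v).1.
Definition col (v : var) : nat := (val v).2.
Definition wt (v : var) : nat := n - row v.
Definition redpair (a b : var) : bool := (row a == row b) && (col a < col b).
Definition tailvar (a b : var) : var := insubd a ((val a).2, (val b).2).

Definition mm (d : mono) (s : seq var) : mono := [ffun v => d v + count_mem v s]%N.
Definition mrem (d : mono) (s : seq var) : mono := [ffun v => d v - count_mem v s]%N.
Definition ws (s : seq var) : nat := \sum_(v <- s) wt v.
Definition w (m : mono) : nat := \sum_(v : var) m v * wt v.

Lemma var_eq (a b : var) : row a = row b -> col a = col b -> a = b.
Proof.
move=> h1 h2; apply: val_inj; move: h1 h2; rewrite /row /col.
case: (val a) => x1 x2; case: (val b) => y1 y2 /= h1 h2.
by congr pair; apply: val_inj.
Qed.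

Lemma row_col (a : var) : (row a < col a)%N.
Proof. exact: (valP a). Qed.
Lemma col_lt (a : var) : (col a < n)%N.
Proof. exact: ltn_ord. Qed.

Lemma tailvarP a b : redpair a b -> row (tailvar a b) = col a /\ col (tailvar a b) = col b.
Proof.
move=> /andP[_ h]. by rewrite /tailvar /row /col insubdK.
Qed.

Lemma mm_perm d s1 s2 : perm_eq s1 s2 -> mm d s1 = mm d s2.
Proof. by move=> /permP h; apply/ffunP => v; rewrite !ffunE h. Qed.

Lemma mm_cat d s t : mm (mm d s) t = mm d (s ++ t).
Proof. by apply/ffunP => v; rewrite !ffunE count_cat addnA. Qed.

Lemma mm_comm d s t : mm (mm d s) t = mm (mm d t) s.
Proof. by rewrite !mm_cat; apply: mm_perm; rewrite perm_catC. Qed.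

Lemma mm_cancel d1 d2 s : mm d1 s = mm d2 s -> d1 = d2.
Proof. move=> h; apply/ffunP => v; move/ffunP: h => /(_ v); rewrite !ffunE; apply: addIn. Qed.

Lemma mm_mrem (d : mono) (s : seq var) : uniq s -> all (fun v => 0 < d v)%N s -> mm (mrem d s) s = d.
Proof.
move=> us hs; apply/ffunP => v; rewrite !ffunE.
have := count_uniq_mem v us; case: (boolP (v \in s)) => hv /= ->.
  by move/allP: hs => /(_ v hv) h; rewrite subnK.
by rewrite subn0 addn0.
Qed.

Lemma mrem_mm d s : mrem (mm d s) s = d.
Proof. by apply/ffunP => v; rewrite !ffunE addnK. Qed.

Lemma ws_cons v s : ws (v :: s) = wt v + ws s.
Proof. by rewrite /ws big_cons. Qed.

Lemma w_mm d s : w (mm d s) = w d + ws s.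
Proof.
rewrite /w /ws /mm (eq_bigr (fun v => d v * wt v + count_mem v s * wt v)%N); last by move=> v _; rewrite ffunE mulnDl.
rewrite big_split /=; congr addn.
elim: s => [|x s IH]; first by rewrite big_nil big1 // => v _; rewrite mul0n.
rewrite big_cons -IH /= (eq_bigr (fun v => (x == v) * wt v + count_mem v s * wt v)%N); last by move=> v _; rewrite mulnDl.
rewrite big_split /=; congr addn.
rewrite (bigD1 x) //= eqxx mul1n big1 ?addn0 // => v /negPf; rewrite eq_sym => -> //.
Qed.

Goal forall (a b c : var), perm_eq [:: a; b; c] [:: c; a; b].
Proof. move=> a b c; apply/permP => P /=. lia. Qed.


Variables beta alpha : R.
Local Open Scope ring_scope.

Definition tails (a b : var) : seq (R * seq var) :=
  let e := tailvar a b in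
  [:: (1, [:: a; e]); (-1, [:: b; e]); (- beta, [:: b]); (- alpha, [::])].

Definition redex (m : mono) : option (var * var) :=
  [pick ab : var * var | redpair ab.1 ab.2 && (0 < m ab.1)%N && (0 < m ab.2)%N].

Fixpoint NMf (k : nat) (m : mono) : Poly :=
  match k with
  | 0 => fun _ => 0
  | k'.+1 => match redex m with
     | None => pM R m
     | Some ab => fun u => \sum_(x <- tails ab.1 ab.2) x.1 * NMf k' (mm (mrem m [:: ab.2; ab.1]) x.2) u
     end
  end.

Definition NM_def (m : mono) : Poly := NMf (w m).+1 m.
Fact NM_key : unit. Proof. by []. Qed.
Definition NM := locked_with NM_key NM_def.
Lemma NME : NM = NM_def. Proof. by rewrite /NM unlock. Qed.
Arguments mm : simpl never.
Arguments mrem : simpl never.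

Lemma redpair_neq a b : redpair a b -> a != b.
Proof. by move=> /andP[_ h]; apply/eqP => E; move: h; rewrite E ltnn. Qed.

Lemma ws_tails a b x : redpair a b -> x \in tails a b -> (ws x.2 < ws [:: b; a])%N.
Proof.
move=> hab; have [h1 h2] := tailvarP hab.
have hb : (wt (tailvar a b) < wt b)%N.
  rewrite /wt h1; move: hab => /andP[/eqP <- _]; have := row_col a; have := col_lt a; lia.
have ha : (wt (tailvar a b) < wt a)%N.
  rewrite /wt h1; have := row_col a; have := col_lt a; lia.
have ha0 : (0 < wt a)%N by rewrite /wt; have := row_col a; have := col_lt a; lia.
rewrite !inE => /or4P [] /eqP -> /=; rewrite !ws_cons /ws big_nil; lia.
Qed.

Lemma redexP m a b : redex m = Some (a, b) -> [/\ redpair a b, (0 < m a)%N & (0 < m b)%N].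
Proof.
rewrite /redex; case: pickP => // [[x y]] /= /andP[/andP[h1 h2] h3] [<- <-]. by split.
Qed.

Lemma redex_mm m a b : redex m = Some (a, b) -> mm (mrem m [:: b; a]) [:: b; a] = m.
Proof.
case/redexP => hab ha hb; apply: mm_mrem => /=.
  by rewrite inE eq_sym (negPf (redpair_neq hab)).
by rewrite ha hb.
Qed.

Lemma NMf_fuel k1 k2 m u : (w m < k1)%N -> (w m < k2)%N -> NMf k1 m u = NMf k2 m u.
Proof.
elim: k1 k2 m => [|k1 IH] [|k2] m //= h1 h2.
case E: (redex m) => [[a b]|] //=.
apply: eq_big_seq => x hx; congr (_ * _); apply: IH.
- move: h1; rewrite -{1}(redex_mm E) !w_mm; have := ws_tails _ hx; case: (redexP E) => hab _ _ /(_ hab).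
  by move=> H2 H1; rewrite -ltnS (leq_trans _ H1) // ltnS ltn_add2l.
- move: h2; rewrite -{1}(redex_mm E) !w_mm; have := ws_tails _ hx; case: (redexP E) => hab _ _ /(_ hab).
  by move=> H2 H1; rewrite -ltnS (leq_trans _ H1) // ltnS ltn_add2l.
Qed.

Lemma NM_eq m u : NM m u = match redex m with None => pM R m u
   | Some ab => \sum_(x <- tails ab.1 ab.2) x.1 * NM (mm (mrem m [:: ab.2; ab.1]) x.2) u end.
Proof.
rewrite NME {1}/NM_def /=; case E: (redex m) => [[a b]|] //=.
apply: eq_big_seq => x hx; congr (_ * _); rewrite /NM_def; apply: NMf_fuel => //.
rewrite -{2}(redex_mm E) !w_mm; have := ws_tails _ hx; case: (redexP E) => hab _ _ /(_ hab).
by move=> H; rewrite ltn_add2l.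
Qed.

Definition V (D : mono) (a b : var) (u : mono) : R :=
  \sum_(x <- tails a b) x.1 * NM (mm D x.2) u.
Definition Red (D : mono) (a b : var) : Prop := forall u, NM (mm D [:: b; a]) u = V D a b u.

Lemma caseA d0 a b a' b' u :
  redpair a b -> redpair a' b' ->
  (forall D x y, redpair x y -> (w (mm D [:: y; x]) < w (mm (mm d0 [:: b'; a']) [:: b; a]))%N -> Red D x y) ->
  V (mm d0 [:: b; a]) a' b' u = V (mm d0 [:: b'; a']) a b u.
Proof.
move=> hab hab' IH; rewrite /V.
transitivity (\sum_(x <- tails a' b') x.1 * \sum_(y <- tails a b) y.1 * NM (mm (mm d0 x.2) y.2) u).
  apply: eq_big_seq => x hx; congr (_ * _); rewrite mm_comm IH //.
  rewrite !w_mm ltn_add2r ltn_add2l; exact: ws_tails hx.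
transitivity (\sum_(y <- tails a b) y.1 * \sum_(x <- tails a' b') x.1 * NM (mm (mm d0 y.2) x.2) u); last first.
  apply: eq_big_seq => y hy; congr (_ * _); rewrite [in RHS]mm_comm IH //.
  rewrite !w_mm -!addnA ltn_add2l [X in (_ < X)%N]addnC ltn_add2r; exact: ws_tails hy.
under eq_bigr do rewrite mulr_sumr.
rewrite exchange_big /=; apply: eq_bigr => y _; rewrite mulr_sumr; apply: eq_bigr => x _.
by rewrite mm_comm mulrCA.
Qed.

Lemma RedP d p q tv t s1 s2 s3 s4 s5 u : Red (mm d t) p q -> tailvar p q = tv ->
  perm_eq s1 (q :: p :: t) -> perm_eq s2 (p :: tv :: t) -> perm_eq s3 (q :: tv :: t) ->
  perm_eq s4 (q :: t) -> perm_eq s5 t ->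
  NM (mm d s1) u = NM (mm d s2) u - NM (mm d s3) u - beta * NM (mm d s4) u - alpha * NM (mm d s5) u.
Proof.
move=> h htv p1 p2 p3 p4 p5; have := h u; rewrite /V /tails htv !big_cons big_nil !mm_cat.
have pc : forall s x, perm_eq s (x ++ t) -> perm_eq s (t ++ x).
  by move=> s x /permP ps; apply/permP => P; rewrite ps !count_cat addnC.
rewrite (mm_perm d (pc _ [:: q; p] p1)) (mm_perm d (pc _ [:: p; tv] p2)) (mm_perm d (pc _ [:: q; tv] p3)) (mm_perm d (pc _ [:: q] p4)).
rewrite (mm_perm d (s1 := s5) (s2 := t ++ [::])); last by rewrite cats0.
move=> ->; rewrite /=; ring.
Qed.

Ltac pp := apply/permP => P /=; ring.

Lemma caseB d x y z u : redpair x y -> redpair y z ->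
  (forall D p q, redpair p q -> (w (mm D [:: q; p]) < w (mm d [:: x; y; z]))%N -> Red D p q) ->
  V (mm d [:: z]) x y u = V (mm d [:: y]) x z u /\ V (mm d [:: z]) x y u = V (mm d [:: x]) y z u.
Proof.
move=> hxy hyz IH.
have hxz : redpair x z.
  by move: hxy hyz => /andP[/eqP h1 l1] /andP[/eqP h2 l2]; rewrite /redpair h1 h2 eqxx (ltn_trans l1 l2).
set e := tailvar x y; set f := tailvar x z; set g := tailvar y z.
have [re ce] := tailvarP hxy; have [rf cf] := tailvarP hxz; have [rg cg] := tailvarP hyz.
have hef : redpair e f by rewrite /redpair re rf eqxx ce cf; case/andP: hyz.
have tef : tailvar e f = g.
  have [r1 c1] := tailvarP hef; apply: var_eq; [by rewrite r1 rg ce | by rewrite c1 cg cf].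
have Wt : forall t p q, (ws t + wt q + wt p < wt x + wt y + wt z)%N -> redpair p q -> Red (mm d t) p q.
  move=> t p q hw hpq; apply: IH => //; rewrite !w_mm !ws_cons /ws big_nil; move: hw; rewrite /ws; lia.
move: (hxy) (hyz) => /andP[/eqP rxy lxy] /andP[/eqP ryz lyz].
have wx : wt x = wt y by rewrite /wt rxy.
have wz : wt z = wt y by rewrite /wt ryz.
have we : wt e = (n - col x)%N by rewrite /wt re.
have wf : wt f = (n - col x)%N by rewrite /wt rf.
have wg : wt g = (n - col y)%N by rewrite /wt rg.
have hh : [/\ (row y < col x)%N, (col x < col y)%N, (col y < col z)%N & (col z < n)%N].
  by split => //; [rewrite -rxy; exact: row_col | exact: col_lt].
case: hh => h1 h2 h3 h4.
have wy : wt y = (n - row y)%N by [].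
have hxn : (col x < n)%N := col_lt x.
have ws0 : ws [::] = 0%N by rewrite /ws big_nil.
have ws1 : forall v, ws [:: v] = wt v by move=> v; rewrite ws_cons ws0 addn0.
have ws2 : forall v v', ws [:: v; v'] = (wt v + wt v')%N by move=> v v'; rewrite ws_cons ws1.
have E1 : NM (mm d [:: x; z; e]) u = NM (mm d [:: x; e; f]) u - NM (mm d [:: z; e; f]) u - beta * NM (mm d [:: z; e]) u - alpha * NM (mm d [:: e]) u.
  apply: (RedP (p:=x) (q:=z) (t:=[:: e]) (tv:=f)) => //; try pp; apply: Wt => //; rewrite ws1; lia.
have E2 : NM (mm d [:: x; e; f]) u = NM (mm d [:: x; e; g]) u - NM (mm d [:: x; f; g]) u - beta * NM (mm d [:: x; f]) u - alpha * NM (mm d [:: x]) u.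
  apply: (RedP (p:=e) (q:=f) (t:=[:: x]) (tv:=g)) => //; try pp; apply: Wt => //; rewrite ws1; lia.
have E3 : NM (mm d [:: z; e; f]) u = NM (mm d [:: z; e; g]) u - NM (mm d [:: z; f; g]) u - beta * NM (mm d [:: z; f]) u - alpha * NM (mm d [:: z]) u.
  apply: (RedP (p:=e) (q:=f) (t:=[:: z]) (tv:=g)) => //; try pp; apply: Wt => //; rewrite ws1; lia.
have E4 : NM (mm d [:: y; z; e]) u = NM (mm d [:: y; e; g]) u - NM (mm d [:: z; e; g]) u - beta * NM (mm d [:: z; e]) u - alpha * NM (mm d [:: e]) u.
  apply: (RedP (p:=y) (q:=z) (t:=[:: e]) (tv:=g)) => //; try pp; apply: Wt => //; rewrite ws1; lia.
have E5 : NM (mm d [:: y; z]) u = NM (mm d [:: y; g]) u - NM (mm d [:: z; g]) u - beta * NM (mm d [:: z]) u - alpha * NM (mm d [::]) u.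
  apply: (RedP (p:=y) (q:=z) (t:=[::]) (tv:=g)) => //; try pp; apply: Wt => //; rewrite ws0; lia.
have E6 : NM (mm d [:: x; y; f]) u = NM (mm d [:: x; e; f]) u - NM (mm d [:: y; e; f]) u - beta * NM (mm d [:: y; f]) u - alpha * NM (mm d [:: f]) u.
  apply: (RedP (p:=x) (q:=y) (t:=[:: f]) (tv:=e)) => //; try pp; apply: Wt => //; rewrite ws1; lia.
have E7 : NM (mm d [:: y; e; f]) u = NM (mm d [:: y; e; g]) u - NM (mm d [:: y; f; g]) u - beta * NM (mm d [:: y; f]) u - alpha * NM (mm d [:: y]) u.
  apply: (RedP (p:=e) (q:=f) (t:=[:: y]) (tv:=g)) => //; try pp; apply: Wt => //; rewrite ws1; lia.
have E8 : NM (mm d [:: y; z; f]) u = NM (mm d [:: y; f; g]) u - NM (mm d [:: z; f; g]) u - beta * NM (mm d [:: z; f]) u - alpha * NM (mm d [:: f]) u.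
  apply: (RedP (p:=y) (q:=z) (t:=[:: f]) (tv:=g)) => //; try pp; apply: Wt => //; rewrite ws1; lia.
have E9 : NM (mm d [:: x; y; g]) u = NM (mm d [:: x; e; g]) u - NM (mm d [:: y; e; g]) u - beta * NM (mm d [:: y; g]) u - alpha * NM (mm d [:: g]) u.
  apply: (RedP (p:=x) (q:=y) (t:=[:: g]) (tv:=e)) => //; try pp; apply: Wt => //; rewrite ws1; lia.
have E10 : NM (mm d [:: x; z; g]) u = NM (mm d [:: x; f; g]) u - NM (mm d [:: z; f; g]) u - beta * NM (mm d [:: z; g]) u - alpha * NM (mm d [:: g]) u.
  apply: (RedP (p:=x) (q:=z) (t:=[:: g]) (tv:=f)) => //; try pp; apply: Wt => //; rewrite ws1; lia.
have E11 : NM (mm d [:: x; z]) u = NM (mm d [:: x; f]) u - NM (mm d [:: z; f]) u - beta * NM (mm d [:: z]) u - alpha * NM (mm d [::]) u.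
  apply: (RedP (p:=x) (q:=z) (t:=[::]) (tv:=f)) => //; try pp; apply: Wt => //; rewrite ws0; lia.
have V1 : V (mm d [:: z]) x y u = NM (mm d [:: x; z; e]) u - NM (mm d [:: y; z; e]) u - beta * NM (mm d [:: y; z]) u - alpha * NM (mm d [:: z]) u.
  rewrite /V /tails -/e !big_cons big_nil !mm_cat /=.
  rewrite (mm_perm d (s1 := [:: z; x; e]) (s2 := [:: x; z; e])); last by pp.
  rewrite (mm_perm d (s1 := [:: z; y; e]) (s2 := [:: y; z; e])); last by pp.
  rewrite (mm_perm d (s1 := [:: z; y]) (s2 := [:: y; z])); last by pp.
  ring.
have V2 : V (mm d [:: y]) x z u = NM (mm d [:: x; y; f]) u - NM (mm d [:: y; z; f]) u - beta * NM (mm d [:: y; z]) u - alpha * NM (mm d [:: y]) u.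
  rewrite /V /tails -/f !big_cons big_nil !mm_cat /=.
  rewrite (mm_perm d (s1 := [:: y; x; f]) (s2 := [:: x; y; f])); last by pp.
  ring.
have V3 : V (mm d [:: x]) y z u = NM (mm d [:: x; y; g]) u - NM (mm d [:: x; z; g]) u - beta * NM (mm d [:: x; z]) u - alpha * NM (mm d [:: x]) u.
  rewrite /V /tails -/g !big_cons big_nil !mm_cat /=.
  ring.
clearbody e f g.
rewrite V1 V2 V3 E1 E6 E2 E3 E4 E5 E7 E8 E9 E10 E11.
split; ring.
Qed.


Lemma third d d' s s' c c' : mm d s = mm d' s' -> c \notin s -> (0 < mm d s c)%N ->
  perm_eq (c :: s) (c' :: s') ->
  d = mm (mrem d [:: c]) [:: c] /\ d' = mm (mrem d [:: c]) [:: c'].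
Proof.
move=> hm hc hpos hp.
have dc : (0 < d c)%N by move: hpos; rewrite /mm ffunE (count_memPn hc) addn0.
have E : d = mm (mrem d [:: c]) [:: c] by rewrite mm_mrem //= dc.
split => //; apply: (@mm_cancel _ _ s'); rewrite -hm {1}E !mm_cat /=.
by apply: mm_perm.
Qed.

Lemma redex_None m a b : redex m = None -> redpair a b -> (0 < m a)%N -> (0 < m b)%N -> False.
Proof.
rewrite /redex; case: pickP => // /(_ (a, b)) /= H _ h1 h2 h3.
by rewrite h1 h2 h3 in H.
Qed.

Lemma step d d' a b a' b' u : redpair a b -> redpair a' b' -> mm d [:: b; a] = mm d' [:: b'; a'] ->
  (forall D x y, redpair x y -> (w (mm D [:: y; x]) < w (mm d [:: b; a]))%N -> Red D x y) ->
  V d' a' b' u = V d a b u.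
Proof.
move=> hab hab' hm IH.
move: (hab) (hab') => /andP[/eqP rab cab] /andP[/eqP rab' cab'].
have nab := redpair_neq hab; have nab' := redpair_neq hab'.
have mpos : forall v, (0 < mm d' [:: b'; a'] v)%N -> v \notin [:: b; a] -> (0 < mm d [:: b; a] v)%N.
  by move=> v; rewrite hm.
have mmpos : forall D s v, v \in s -> (0 < mm D s v)%N.
  by move=> D s v hv; rewrite /mm ffunE addn_gt0 -has_count has_pred1 hv orbT.
have m_a' : (0 < mm d' [:: b'; a'] a')%N by apply: mmpos; rewrite !inE eqxx orbT.
have m_b' : (0 < mm d' [:: b'; a'] b')%N by apply: mmpos; rewrite !inE eqxx.
have IHB : forall D x y z, redpair x y -> redpair y z -> mm D [:: x; y; z] = mm d [:: b; a] ->
    V (mm D [:: z]) x y u = V (mm D [:: y]) x z u /\ V (mm D [:: z]) x y u = V (mm D [:: x]) y z u.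
  move=> D x y z hxy hyz hD; apply: caseB => //; rewrite hD; exact: IH.
have rp : forall x y, row x = row y -> (col x < col y)%N -> redpair x y.
  by move=> x y h1 h2; rewrite /redpair h1 eqxx h2.
case: (eqVneq a' a) => [ea|na]; case: (eqVneq b' b) => [eb|nb].
- subst a' b'; rewrite (mm_cancel (esym hm)) //.
- subst a'.
  have nb2 : col b != col b'.
    apply/eqP => cb; move/eqP: nb; apply; apply: var_eq => //; by rewrite -rab'.
  have hc : b' \notin [:: b; a] by rewrite !inE negb_or nb eq_sym nab'.
  have [Ed Ed'] := third hm hc (mpos _ m_b' hc) (c' := b) (ltac:(pp)).
  set D := mrem d [:: b']; rewrite -/D in Ed Ed'.
  case: (ltngtP (col b) (col b')) => hbb; last by rewrite hbb eqxx in nb2.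
  + have [H1 _] := IHB D a b b' hab (rp _ _ (etrans (esym rab) rab') hbb) ltac:(rewrite Ed mm_cat; apply: mm_perm; pp).
    by rewrite Ed Ed' H1.
  + have [H1 _] := IHB D a b' b hab' (rp _ _ (etrans (esym rab') rab) hbb) ltac:(rewrite Ed mm_cat; apply: mm_perm; pp).
    by rewrite Ed Ed' H1.
- subst b'.
  have na2 : col a != col a'.
    apply/eqP => ca; move/eqP: na; apply; apply: var_eq => //; by rewrite rab'.
  have hc : a' \notin [:: b; a] by rewrite !inE negb_or na andbT.
  have [Ed Ed'] := third hm hc (mpos _ m_a' hc) (c' := a) (ltac:(pp)).
  set D := mrem d [:: a']; rewrite -/D in Ed Ed'.
  case: (ltngtP (col a) (col a')) => haa; last by rewrite haa eqxx in na2.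
  + have [H1 H2] := IHB D a a' b (rp _ _ (etrans rab (esym rab')) haa) hab' ltac:(rewrite Ed mm_cat; apply: mm_perm; pp).
    by rewrite Ed Ed' -H2 H1.
  + have [H1 H2] := IHB D a' a b (rp _ _ (etrans rab' (esym rab)) haa) hab ltac:(rewrite Ed mm_cat; apply: mm_perm; pp).
    by rewrite Ed Ed' -H1 H2.
- case: (eqVneq a' b) => [eab|nab2].
    subst a'.
    have nb'a : b' != a by apply/eqP => E; move: cab'; rewrite E; lia.
    have hc : b' \notin [:: b; a] by rewrite !inE negb_or nb nb'a.
    have [Ed Ed'] := third hm hc (mpos _ m_b' hc) (c' := a) (ltac:(pp)).
    set D := mrem d [:: b']; rewrite -/D in Ed Ed'.
    have [_ H2] := IHB D a b b' hab hab' ltac:(rewrite Ed mm_cat; apply: mm_perm; pp).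
    by rewrite Ed Ed' H2.
  case: (eqVneq b' a) => [eba|nba].
    subst b'.
    have hc : a' \notin [:: b; a] by rewrite !inE negb_or na nab2.
    have [Ed Ed'] := third hm hc (mpos _ m_a' hc) (c' := b) (ltac:(pp)).
    set D := mrem d [:: a']; rewrite -/D in Ed Ed'.
    have [_ H2] := IHB D a' a b hab' hab ltac:(rewrite Ed mm_cat; apply: mm_perm; pp).
    by rewrite Ed Ed' H2.
  have ha' : a' \notin [:: b; a] by rewrite !inE negb_or na nab2.
  have hb' : b' \notin [:: b; a] by rewrite !inE negb_or nb nba.
  have da' := mpos _ m_a' ha'; have db' := mpos _ m_b' hb'.
  move: da' db'; rewrite /mm !ffunE (count_memPn ha') (count_memPn hb') !addn0 => da' db'.
  set D := mrem d [:: b'; a'].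
  have Ed : d = mm D [:: b'; a'] by rewrite mm_mrem //= ?inE ?da' ?db' ?andbT // eq_sym.
  have Ed' : d' = mm D [:: b; a].
    apply: (@mm_cancel _ _ [:: b'; a']); rewrite -hm Ed mm_comm //.
  rewrite Ed Ed'; apply: caseA => //; rewrite -Ed; exact: IH.
Qed.

Lemma mm_pos D s v : v \in s -> (0 < mm D s v)%N.
Proof. by move=> hv; rewrite /mm ffunE addn_gt0 -has_count has_pred1 hv orbT. Qed.

Lemma diamond W : forall d a b, redpair a b -> (w (mm d [:: b; a]) < W)%N -> Red d a b.
Proof.
elim: W => // W IH d a b hab hw u.
rewrite NM_eq; case E: (redex _) => [[a' b']|].
- case: (redexP E) => hab' _ _.
  change (V (mrem (mm d [:: b; a]) [:: b'; a']) a' b' u = V d a b u).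
  apply: step => //; first by rewrite redex_mm.
  move=> D x y hxy hw'; apply: IH => //; exact: leq_trans hw' hw.
- exfalso; apply: (redex_None E hab); apply: mm_pos; rewrite !inE eqxx ?orbT //.
Qed.

Lemma Red_all d a b : redpair a b -> Red d a b.
Proof. by move=> hab; apply: (@diamond (w (mm d [:: b; a])).+1). Qed.

Lemma sum_delta (r : seq mono) y (F : mono -> R) : uniq r -> y \in r ->
  \sum_(t <- r) (t == y)%:R * F t = F y.
Proof.
move=> ur yr; rewrite (big_rem y) //= eqxx mul1r big_seq big1 ?addr0 // => t.
by rewrite (mem_rem_uniq _ ur) inE => /andP[/negPf -> _]; rewrite mul0r.
Qed.

Definition Lrep (L : seq (R * mono)) (t : mono) : R := \sum_(x <- L) x.1 * (t == x.2)%:R.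
Definition NL (L : seq (R * mono)) (u : mono) : R := \sum_(x <- L) x.1 * NM x.2 u.

Lemma NL_group L u : NL L u = \sum_(t <- undup (map snd L)) Lrep L t * NM t u.
Proof.
rewrite /NL /Lrep.
under [RHS]eq_bigr do rewrite mulr_suml.
rewrite exchange_big /=; apply: eq_big_seq => x hx.
under eq_bigr do rewrite -mulrA mulrCA.
rewrite (@sum_delta _ _ (fun i => x.1 * NM i u)) ?undup_uniq //.
by rewrite mem_undup; apply: map_f.
Qed.

Lemma NM_std t u : redex t = None -> NM t u = (u == t)%:R.
Proof. by move=> h; rewrite NM_eq h /pM; case: eqP. Qed.

Lemma std_rep (f : Poly) L : (forall t, f t = Lrep L t) ->
  (forall t, f t != 0 -> redex t = None) -> forall u, f u = NL L u.
Proof.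
move=> hf hs u; rewrite NL_group.
rewrite (eq_big_seq (fun t => (t == u)%:R * f t)); last first.
  move=> t _; rewrite -hf; case: (eqVneq (f t) 0) => [->|/hs h]; first by rewrite !mulr0 mul0r.
  by rewrite NM_std // mulrC eq_sym.
case: (boolP (u \in undup (map snd L))) => hu; first by rewrite sum_delta ?undup_uniq.
rewrite big_seq big1 ?hf.
  rewrite /Lrep big_seq big1 // => x hx; case: eqP => [E|]; last by rewrite mulr0.
  by move: hu; rewrite mem_undup E map_f.
by move=> t ht; case: eqP => [E|]; [move: hu; rewrite -E ht | rewrite mul0r].
Qed.

Definition gl (a b : var) : seq (R * seq var) :=
  let e := tailvar a b in
  [:: (1, [:: b; a]); (-1, [:: a; e]); (1, [:: b; e]); (beta, [:: b]); (alpha, [::])].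
Definition Gp (a b : var) : Poly := fun t => \sum_(x <- gl a b) x.1 * (t == mm (mono1 n) x.2)%:R.

Lemma monoXX x y : monoM (monoX x) (monoX y) = mm (mono1 n) [:: x; y].
Proof. by apply/ffunP => v; rewrite !ffunE /= addn0 !(eq_sym v). Qed.
Lemma monoX1 x : monoX x = mm (mono1 n) [:: x].
Proof. by apply/ffunP => v; rewrite !ffunE /= addn0 !(eq_sym v). Qed.
Lemma mono10 : mono1 n = mm (mono1 n) [::].
Proof. by apply/ffunP => v; rewrite !ffunE. Qed.

Lemma eval_shape (a b e : var) (t : mono) :
  padd (padd (padd (psub (pXX R b a) (pXX R a e)) (pXX R b e)) (pterm_mul beta (mono1 n) (pX R b))) (pC alpha) t
  = \sum_(x <- [:: (1, [:: b; a]); (-1, [:: a; e]); (1, [:: b; e]); (beta, [:: b]); (alpha, [::])])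
       x.1 * (t == mm (mono1 n) x.2)%:R.
Proof.
rewrite /padd /psub /pXX /pX /pM /pterm_mul /pC.
rewrite !big_cons big_nil !monoXX monoX1 -mono10.
have -> : [forall v, (mono1 n v <= t v)%N] by apply/forallP => v; rewrite ffunE.
have -> : [ffun v => (t v - mono1 n v)%N] = t by apply/ffunP => v; rewrite !ffunE subn0.
rewrite /=; move: (mm (mono1 n) [:: b; a]) (mm (mono1 n) [:: a; e]) (mm (mono1 n) [:: b; e]) (mm (mono1 n) [:: b]) (mono1 n) => m1 m2 m3 m4 m5.
by do 5!case: (_ == _); rewrite /=; ring.
Qed.

Lemma genG_Gp (i j k : 'I_n) (hij : (i < j)%N) (hjk : (j < k)%N) :
  redpair (mkvar hij) (mkvar (ltn_trans hij hjk)) /\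
  tailvar (mkvar hij) (mkvar (ltn_trans hij hjk)) = mkvar hjk /\
  forall t, genG beta alpha hij hjk t = Gp (mkvar hij) (mkvar (ltn_trans hij hjk)) t.
Proof.
have hab : redpair (mkvar hij) (mkvar (ltn_trans hij hjk)) by rewrite /redpair /row /col /= eqxx hjk.
have te : tailvar (mkvar hij) (mkvar (ltn_trans hij hjk)) = mkvar hjk.
  by have [h1 h2] := tailvarP hab; apply: var_eq; [rewrite h1 | rewrite h2].
do 2!split => //.
move=> t; rewrite /Gp /gl te; exact: eval_shape.
Qed.

Lemma Gset_Gp g : Gset beta alpha g -> exists a b, redpair a b /\ forall t, g t = Gp a b t.
Proof.
case=> i [j [k [hij [hjk ->]]]]; have [h1 [_ h3]] := genG_Gp hij hjk.
by exists (mkvar hij), (mkvar (ltn_trans hij hjk)).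
Qed.

Lemma Gp_Gset a b : redpair a b -> Gset beta alpha (Gp a b).
Proof.
move=> hab; have hij := valP a; move: (hab) => /andP[/eqP hr hjk].
exists (val a).1, (val a).2, (val b).2, hij, hjk.
have [_ [_ h3]] := genG_Gp hij hjk.
have Ea : mkvar hij = a by apply: val_inj => /=; case: (val a).
have Eb : mkvar (ltn_trans hij hjk) = b.
  apply: val_inj => /=; rewrite [RHS]surjective_pairing; congr pair; exact: val_inj.
apply: functional_extensionality => t; by rewrite h3 Ea Eb.
Qed.

Lemma pterm_Gp c s a b t : pterm_mul c s (Gp a b) t = Lrep [seq (c * x.1, mm s x.2) | x <- gl a b] t.
Proof.
rewrite /pterm_mul /Lrep big_map /Gp mulr_sumr.
case: forallP => [hle|hnle].
  apply: eq_bigr => x _; rewrite mulrA; congr (_ * _%:R).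
  rewrite /=; congr nat_of_bool; apply/idP/idP => /eqP E; apply/eqP; apply/ffunP => v; move/ffunP: E => /(_ v); rewrite !ffunE;
    have := hle v; move: (t v) (s v) (count_mem v x.2) => T S C; lia.
rewrite big1 // => x _; case: eqP => [E|]; last by rewrite mulr0.
by exfalso; apply: hnle => v; rewrite E ffunE leq_addr.
Qed.

Lemma NL_gen c s a b u : redpair a b -> NL [seq (c * x.1, mm s x.2) | x <- gl a b] u = 0.
Proof.
move=> hab; rewrite /NL big_map /gl !big_cons big_nil /=.
have := Red_all s hab u; rewrite /V /tails !big_cons big_nil /= => ->.
ring.
Qed.

Lemma ideal_rep f : in_ideal (Gset beta alpha) f ->
  exists L, (forall t, f t = Lrep L t) /\ forall u, NL L u = 0.
Proof.
elim => [|c s g p hg _ [L [hL hN]]].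
  by exists [::]; split => [t|u]; rewrite /Lrep /NL big_nil.
have [a [b [hab hgp]]] := Gset_Gp hg.
exists (L ++ [seq (c * x.1, mm s x.2) | x <- gl a b]); split.
  move=> t; rewrite /padd /Lrep big_cat /= -/(Lrep L t) -hL -/(Lrep _ t) -pterm_Gp.
  by congr (_ + _); rewrite /pterm_mul hgp.
by move=> u; rewrite /NL big_cat /= -/(NL L u) -/(NL _ u) hN NL_gen // addr0.
Qed.

Lemma ideal_std_zero f : in_ideal (Gset beta alpha) f ->
  (forall t, f t != 0 -> redex t = None) -> forall u, f u = 0.
Proof.
move=> /ideal_rep [L [hL hN]] hs u; by rewrite (std_rep hL hs) hN.
Qed.

Lemma mm_neq d s s' : (ws s < ws s')%N -> mm d s != mm d s'.
Proof. by move=> h; apply/eqP => E; move: h; rewrite -(addnK (w d) (ws s)) addnC -w_mm E w_mm addnC addnK ltnn. Qed.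

Lemma mm1E s v : mm (mono1 n) s v = count_mem v s.
Proof. by rewrite /mm /mono1 !ffunE. Qed.

Lemma var_gt_row (x y : var) : var_gt x y -> (row x <= row y)%N.
Proof. by rewrite /var_gt /row => /orP [/ltnW | /andP[/eqP -> _]]. Qed.

Lemma var_gt_irr (x : var) : var_gt x x = false.
Proof. by rewrite /var_gt ltnn eqxx ltnn. Qed.

Lemma Gp_HT a b : redpair a b -> is_HT (Gp a b) (mm (mono1 n) [:: b; a]) /\ Gp a b (mm (mono1 n) [:: b; a]) = 1.
Proof.
move=> hab; set e := tailvar a b.
have [re ce] := tailvarP hab; rewrite -/e in re ce.
move: (hab) => /andP[/eqP rab cab].
have rac := row_col a.
have neb : e != b by apply/eqP => E; move: re; rewrite E -rab; lia.
have nea : e != a by apply/eqP => E; move: re; rewrite E; lia.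
have nab := redpair_neq hab.
set h := mm (mono1 n) [:: b; a].
have tl : forall x, x \in tails a b -> mm (mono1 n) x.2 != h.
  by move=> x hx; apply: mm_neq; apply: ws_tails.
have Gh : Gp a b h = 1.
  rewrite /Gp /gl !big_cons big_nil eqxx /=.
  have t1 := tl (1, [:: a; e]); have t2 := tl (-1, [:: b; e]); have t3 := tl (- beta, [:: b]);
  have t4 := tl (- alpha, [::]).
  rewrite !(eq_sym h) (negPf (t1 _)) ?(negPf (t2 _)) ?(negPf (t3 _)) ?(negPf (t4 _)) ?inE ?eqxx ?orbT //.
  by rewrite /=; ring.
split => //. split; first by rewrite Gh oner_neq0.
move=> t; rewrite /Gp /gl !big_cons big_nil.
case: (eqVneq t h) => [->|nth]; first by left.
case: (eqVneq t (mm (mono1 n) [:: a; e])) => [->|n1].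
  move=> _; right; exists b; split.
    rewrite !mm1E /= eqxx; case: (a =P b) => [E|_]; first by rewrite E eqxx in nab.
    by case: (e =P b) => [E|_]; first by rewrite E eqxx in neb.
  move=> eta heta; rewrite !mm1E /=.
  have nbe : b != eta by apply/eqP => E; rewrite E var_gt_irr in heta.
  have nee : e != eta by apply/eqP => E; move: (var_gt_row heta); rewrite -E re -rab; lia.
  by rewrite (negPf nbe) (negPf nee).
move=> hnz; right; exists a.
have hx : forall eta, var_gt eta a -> [&& a != eta, b != eta & e != eta].
  move=> eta heta; apply/and3P; split; apply/eqP => E.
  - by rewrite E var_gt_irr in heta.
  - move: heta; rewrite -E /var_gt => /orP[hh|/andP[_ hh]]; move: hh; rewrite /row /col in rab cab *; [by rewrite rab ltnn | by rewrite ltnNge (ltnW cab)].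
  - by move: (var_gt_row heta); rewrite -E re; lia.
case: (eqVneq t (mm (mono1 n) [:: b; e])) => [->|n2].
  split; first by rewrite !mm1E /= eqxx (eq_sym b) (negPf nab) (negPf nea).
  by move=> eta /hx /and3P[/negPf h1 /negPf h2 /negPf h3]; rewrite !mm1E /= h1 h2 h3.
case: (eqVneq t (mm (mono1 n) [:: b])) => [->|n3].
  split; first by rewrite !mm1E /= eqxx (eq_sym b) (negPf nab).
  by move=> eta /hx /and3P[/negPf h1 /negPf h2 /negPf h3]; rewrite !mm1E /= h1 h2.
case: (eqVneq t (mm (mono1 n) [::])) => [->|n4].
  split; first by rewrite !mm1E /= eqxx; case: (b == a).
  by move=> eta /hx /and3P[/negPf h1 /negPf h2 /negPf h3]; rewrite !mm1E /= h1 h2.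
by move: hnz; rewrite /= -/e (negPf n2) (negPf n3) (negPf n4) !mulr0 !addr0 eqxx.
Qed.

Lemma Gp_monic a b : redpair a b -> Defs.monic (Gp a b).
Proof. by move=> hab; exists (mm (mono1 n) [:: b; a]); apply: Gp_HT. Qed.

Lemma genJ_genG (i j k : 'I_n) (hij : (i < j)%N) (hjk : (j < k)%N) t :
  genJ beta alpha hij hjk t = - genG beta alpha hij hjk t.
Proof.
rewrite /genJ /genG /padd /psub.
move: (pXX _ _ _ t) (pXX _ _ _ t) (pXX _ _ _ t) (pterm_mul _ _ _ t) (pC _ t) => A B C D E.
ring.
Qed.

Lemma pterm_neg a s (g g' : Poly) : (forall t, g t = - g' t) ->
  pterm_mul a s g = pterm_mul (- a) s g'.
Proof.
move=> h; apply: functional_extensionality => t; rewrite /pterm_mul.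
by case: forallP => _ //; rewrite h mulrN mulNr.
Qed.

Lemma ideal_transfer (S1 S2 : Poly -> Prop) f :
  (forall g, S1 g -> exists g', S2 g' /\ forall t, g t = - g' t) ->
  in_ideal S1 f -> in_ideal S2 f.
Proof.
move=> hS; elim => [|a s g p hg _ IH]; first exact: in_ideal0.
have [g' [hg' hgg']] := hS g hg; rewrite (pterm_neg a s hgg').
exact: in_ideal_step.
Qed.

Lemma ideal_eq (f : Poly) : in_ideal (Gset beta alpha) f <-> Jideal beta alpha f.
Proof.
split; apply: ideal_transfer => g.
- case=> i [j [k [hij [hjk ->]]]]; exists (genJ beta alpha hij hjk); split.
    by exists i, j, k, hij, hjk.
  by move=> t; rewrite genJ_genG opprK.
- case=> i [j [k [hij [hjk ->]]]]; exists (genG beta alpha hij hjk); split.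
    by exists i, j, k, hij, hjk.
  exact: genJ_genG.
Qed.

Lemma monoM_mm s l : monoM s (mm (mono1 n) l) = mm s l.
Proof. by apply/ffunP => v; rewrite /mm !ffunE. Qed.

Lemma Lrep_out L t : t \notin map snd L -> Lrep L t = 0.
Proof.
move=> ht; rewrite /Lrep big_seq big1 // => x hx; case: eqP => [E|]; last by rewrite mulr0.
by move: ht; rewrite E map_f.
Qed.

Lemma Lrep_head c s a b : redpair a b ->
  Lrep [seq (c * x.1, mm s x.2) | x <- gl a b] (mm s [:: b; a]) = c.
Proof.
move=> hab; rewrite /Lrep big_map /gl !big_cons big_nil /= eqxx.
have t1 := ws_tails (x := (1, [:: a; tailvar a b])) hab.
have t2 := ws_tails (x := (-1, [:: b; tailvar a b])) hab.
have t3 := ws_tails (x := (- beta, [:: b])) hab.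
have t4 := ws_tails (x := (- alpha, [::])) hab.
rewrite !(eq_sym (mm s [:: b; a])) (negPf (mm_neq s (t1 _))) ?(negPf (mm_neq s (t2 _))) ?(negPf (mm_neq s (t3 _))) ?(negPf (mm_neq s (t4 _))) ?inE ?eqxx ?orbT //.
by rewrite /=; ring.
Qed.

Lemma gl_ws a b x : redpair a b -> x \in gl a b -> x.2 = [:: b; a] \/ (ws x.2 < ws [:: b; a])%N.
Proof.
move=> hab; rewrite /gl !inE => /orP[/eqP -> | ]; first by left.
move=> /or4P [] /eqP -> /=; right.
- exact: (ws_tails (x := (1, [:: a; tailvar a b])) hab (mem_head _ _)).
- by apply: (ws_tails (x := (-1, [:: b; tailvar a b])) hab); rewrite !inE eqxx orbT.
- by apply: (ws_tails (x := (- beta, [:: b])) hab); rewrite !inE eqxx !orbT.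
- by apply: (ws_tails (x := (- alpha, [::])) hab); rewrite !inE eqxx !orbT.
Qed.

Lemma reduce_all W : forall (f : Poly) (S : seq mono), (forall t, f t != 0 -> t \in S) ->
  (forall t, f t != 0 -> redex t != None -> (w t < W)%N) ->
  exists r, red_star (Gset beta alpha) f r /\ forall t, r t != 0 -> redex t = None.
Proof.
elim: W => [|W IHW] f S hS hW.
  exists f; split; first exact: red_refl.
  by move=> t ht; case E: (redex t) => [p|] //; have := hW t ht; rewrite E => /(_ isT).
suff: forall (L : seq mono) (f : Poly) (S : seq mono), (forall t, f t != 0 -> t \in S) ->
  (forall t, f t != 0 -> redex t != None -> (w t < W.+1)%N) ->
  (forall t, f t != 0 -> redex t != None -> w t = W -> t \in L) ->
  exists r, red_star (Gset beta alpha) f r /\ forall t, r t != 0 -> redex t = None.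
  by move=> /(_ S f S hS hW); apply => t ht _ _; apply: hS.
clear hS hW; clear f S.
elim => [|t0 L IHL] f S hS hW hL.
  apply: (IHW f S hS) => t ht hn; have := hW t ht hn; have := hL t ht hn; rewrite in_nil.
  move=> h2 h1; rewrite ltn_neqAle -ltnS h1 andbT; apply/eqP => Ew; by have := h2 Ew.
have hLL : (forall t, f t != 0 -> redex t != None -> w t = W -> t != t0) ->
           exists r, red_star (Gset beta alpha) f r /\ forall t, r t != 0 -> redex t = None.
  move=> hne; apply: (IHL f S hS hW) => t ht hn hw.
  by have := hL t ht hn hw; rewrite inE (negPf (hne t ht hn hw)).
case E: (redex t0) => [[a b]|]; last first.
  by apply: hLL => t ht hn _; apply/eqP => Et; move: hn; rewrite Et E.
case: (eqVneq (f t0) 0) => hf0.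
  by apply: hLL => t ht _ _; apply/eqP => Et; move: ht; rewrite Et hf0 eqxx.
case: (redexP E) => hab _ _.
set s := mrem t0 [:: b; a].
have ht0 : mm s [:: b; a] = t0 := redex_mm E.
set f' : Poly := psub f (pterm_mul (f t0) s (Gp a b)).
set Nw := [seq mm s x.2 | x <- gl a b].
have f'E : forall t, f' t = f t - Lrep [seq (f t0 * x.1, mm s x.2) | x <- gl a b] t.
  by move=> t; rewrite /f' /psub pterm_Gp.
have out : forall t, t \notin Nw -> f' t = f t.
  by move=> t ht; rewrite f'E Lrep_out ?subr0 // -map_comp.
have f't0 : f' t0 = 0 by rewrite f'E; have := Lrep_head (f t0) s hab; rewrite ht0 => ->; rewrite subrr.
have t0N : t0 \in Nw by rewrite -ht0 /Nw /gl /= inE eqxx.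
have newlt : forall t, t \in Nw -> t != t0 -> (w t < w t0)%N.
  move=> t /mapP [x hx ->] hne; case: (gl_ws hab hx) => [E2|hlt].
    by move: hne; rewrite E2 ht0 eqxx.
  by rewrite -ht0 !w_mm ltn_add2l.
have wt0 : (w t0 < W.+1)%N by apply: hW => //; rewrite E.
have [r [hr hrs]] : exists r, red_star (Gset beta alpha) f' r /\ forall t, r t != 0 -> redex t = None.
  apply: (IHL f' (S ++ Nw)).
  - move=> t ht; rewrite mem_cat; case: (boolP (t \in Nw)) => hN; first by rewrite orbT.
    by rewrite hS // -(out t hN).
  - move=> t ht hn; case: (boolP (t \in Nw)) => hN.
      have hne : t != t0 by apply/eqP => Et; move: ht; rewrite Et f't0 eqxx.
      exact: ltn_trans (newlt t hN hne) wt0.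
    by apply: hW => //; rewrite -(out t hN).
  - move=> t ht hn hw; case: (boolP (t \in Nw)) => hN.
      have hne : t != t0 by apply/eqP => Et; move: ht; rewrite Et f't0 eqxx.
      by have := newlt t hN hne; rewrite hw; move: wt0; rewrite ltnS => h1 h2; have := leq_ltn_trans h1 h2; rewrite ltnn.
    have hft : f t != 0 by rewrite -(out t hN).
    have := hL t hft hn hw; rewrite inE; case: eqP => [Et|] //=.
    by move: hN; rewrite Et t0N.
exists r; split => //; apply: (red_step (g := f')) => //.
exists (Gp a b), t0, s; split; first exact: Gp_Gset.
split => //; split => //.
exists (mm (mono1 n) [:: b; a]); split; first by case: (Gp_HT hab).
by rewrite monoM_mm.
Qed.

Lemma red1_ideal (f g : Poly) : red1 (Gset beta alpha) f g -> in_ideal (Gset beta alpha) f -> in_ideal (Gset beta alpha) g.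
Proof.
move=> [p [t [s [hp [_ [_ ->]]]]]] hf.
have -> : psub f (pterm_mul (f t) s p) = padd f (pterm_mul (- f t) s p).
  apply: functional_extensionality => u; rewrite /psub /padd /pterm_mul.
  by case: forallP => _; rewrite ?mulNr ?oppr0.
exact: in_ideal_step.
Qed.

Lemma red_star_ideal (f r : Poly) : red_star (Gset beta alpha) f r -> in_ideal (Gset beta alpha) f -> in_ideal (Gset beta alpha) r.
Proof. by elim => // {}f g h h1 _ IH hf; apply: IH; apply: red1_ideal h1 hf. Qed.

Lemma main_sec : groebner_basis (@Gset R n beta alpha) (@Jideal R n beta alpha).
Proof.
split; [|split].
- move=> g hg; have [a [b [hab hgp]]] := Gset_Gp hg.
  have -> : g = Gp a b by apply: functional_extensionality.
  exact: Gp_monic.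
- exact: ideal_eq.
- move=> p /ideal_eq hp.
  have [L [hL _]] := ideal_rep hp.
  have cov : forall t, p t != 0 -> t \in map snd L.
    by move=> t; rewrite hL; apply: contraR => /Lrep_out ->; rewrite eqxx.
  have hW : forall t, p t != 0 -> redex t != None -> (w t < \sum_(u <- map snd L) (w u).+1)%N.
    move=> t /cov ht _; rewrite (big_rem t) //=; exact: leq_addr.
  have [r [hr hs]] := reduce_all cov hW.
  have hri := red_star_ideal hr hp.
  have -> : @p0 R n = r.
    by apply: functional_extensionality => u; rewrite (ideal_std_zero hri hs).
  exact: hr.
Qed.

End Main.

Theorem proposition4p9 (R : comNzRingType) (beta alpha : R) (n : nat)
  (hn : (0 < n)%N) :
  groebner_basis (@Gset R n beta alpha) (@Jideal R n beta alpha).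
Proof. exact: main_sec. Qed.
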